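(* Let $\nu>0$, $\epsilon\in\{0,1\}$, and $\lambda\neq0$ real. For every smooth solution $U(X,T)$ of $$-2\nu^2U_XU_{XX}+3\epsilon U_XU-\nu^2U_{XXX}U+\tfrac23U_{XXX}-\tfrac23\nu^{5/2}U_{XXX}+\epsilon U_T-\nu^2U_{XXT}=0,\qquad(E_{\nu,\epsilon})$$ the system $$\hat\gamma_X=-\frac{\hat\gamma^2}{2\lambda}-\frac{\epsilon U}{\nu^2}+\frac{\lambda\epsilon}{2\nu^2}+\frac{\epsilon}{3\nu^{3/2}}+U_{XX}-\frac{\epsilon}{3\nu^4},$$ $$\hat\gamma_T=\Big(\frac{U}{2\lambda}-\frac{1}{3\nu^2\lambda}+\frac12+\frac{\sqrt\nu}{3\lambda}\Big)\hat\gamma^2-U_X\hat\gamma-\tfrac23\sqrt\nu\,U_{XX}-\frac{2\epsilon}{9\nu^6}-U_{XX}U+\frac{\epsilon U^2}{\nu^2}-\frac{2\lambda\epsilon}{3\nu^{3/2}}+\frac{2\lambda\epsilon}{3\nu^4}+\frac{\lambda\epsilon U}{2\nu^2}-\frac{\lambda^2\epsilon}{2\nu^2}-\frac{2\epsilon}{9\nu}-\frac{\epsilon U}{3\nu^4}+\frac{4\epsilon}{9\nu^{7/2}}+\frac{\epsilon U}{3\nu^{3/2}}+\frac{2U_{XX}}{3\nu^2}$$ for $\hat\gamma(X,T)$ is completely integrable; that is, $\hat\gamma$ is a quadratic pseudo-potential of $(E_{\nu,\epsilon})$.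
   Context: A real function $\Gamma$ is a pseudo-potential of an equation if there are smooth functions $f,g$ of $\Gamma$, the independent variables, $U$ and finitely many derivatives of $U$ such that $\Omega_\Gamma=d\Gamma-(f\,dX+g\,dT)$ satisfies $d\Omega_\Gamma\equiv0\bmod\Omega_\Gamma$ on every solution (equivalently, $\Gamma_X=f$, $\Gamma_T=g$ is compatible on solutions); it is quadratic if $f,g$ are polynomials of degree at most two in $\Gamma$. *)

(* Defs.v *)
From Stdlib Require Import Reals List.
From Coquelicot Require Import Coquelicot.
Open Scope R_scope.

Definition dX (u : R -> R -> R) : R -> R -> R :=
  fun x t => Derive (fun x' => u x' t) x.
Definition dT (u : R -> R -> R) : R -> R -> R :=
  fun x t => Derive (fun t' => u x t') t.

Fixpoint dword (w : list bool) (u : R -> R -> R) : R -> R -> R :=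
  match w with
  | nil => u
  | b :: w' => if b then dX (dword w' u) else dT (dword w' u)
  end.

Definition smooth2 (u : R -> R -> R) : Prop :=
  forall w : list bool,
    (forall x t,
        ex_derive (fun x' => dword w u x' t) x /\
        ex_derive (fun t' => dword w u x t') t) /\
    (forall p : R * R, continuous (fun q : R * R => dword w u (fst q) (snd q)) p).

(* The equation (E_{nu,eps}); nu^{5/2} = nu^2 sqrt nu. *)
Definition is_solution (nu eps : R) (U : R -> R -> R) : Prop :=
  forall x t,
    let u := U x t in
    let ux := dX U x t in
    let uxx := dX (dX U) x t in
    let uxxx := dX (dX (dX U)) x t in
    let ut := dT U x t in
    let uxxt := dT (dX (dX U)) x t in
    - 2 * nu ^ 2 * ux * uxx + 3 * eps * ux * u - nu ^ 2 * uxxx * u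
    + 2 / 3 * uxxx - 2 / 3 * (nu ^ 2 * sqrt nu) * uxxx
    + eps * ut - nu ^ 2 * uxxt = 0.

(* Right-hand side f of  gamma_X = f  (nu^{3/2} = nu sqrt nu). *)
Definition fX (nu eps lam : R) (g u uxx : R) : R :=
  - g ^ 2 / (2 * lam) - eps * u / nu ^ 2 + lam * eps / (2 * nu ^ 2)
  + eps / (3 * (nu * sqrt nu)) + uxx - eps / (3 * nu ^ 4).

(* Right-hand side g of  gamma_T = g  (nu^{7/2} = nu^3 sqrt nu). *)
Definition gT (nu eps lam : R) (g u ux uxx : R) : R :=
  (u / (2 * lam) - 1 / (3 * nu ^ 2 * lam) + 1 / 2 + sqrt nu / (3 * lam)) * g ^ 2
  - ux * g - 2 / 3 * sqrt nu * uxx - 2 * eps / (9 * nu ^ 6) - uxx * u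
  + eps * u ^ 2 / nu ^ 2 - 2 * lam * eps / (3 * (nu * sqrt nu))
  + 2 * lam * eps / (3 * nu ^ 4) + lam * eps * u / (2 * nu ^ 2)
  - lam ^ 2 * eps / (2 * nu ^ 2) - 2 * eps / (9 * nu) - eps * u / (3 * nu ^ 4)
  + 4 * eps / (9 * (nu ^ 3 * sqrt nu)) + eps * u / (3 * (nu * sqrt nu))
  + 2 * uxx / (3 * nu ^ 2).

(* Complete integrability (Frobenius compatibility) of the system
     Gamma_X = F(X,T,Gamma),  Gamma_T = G(X,T,Gamma):
   dF/dT + dF/dGamma * G = dG/dX + dG/dGamma * F  for all X, T, Gamma. *)
Definition compatible (F G : R -> R -> R -> R) : Prop :=
  forall x t g,
    Derive (fun t' => F x t' g) t + Derive (fun g' => F x t g') g * G x t g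
    = Derive (fun x' => G x' t g) x + Derive (fun g' => G x t g') g * F x t g.

Definition Fsys (nu eps lam : R) (U : R -> R -> R) : R -> R -> R -> R :=
  fun x t g => fX nu eps lam g (U x t) (dX (dX U) x t).
Definition Gsys (nu eps lam : R) (U : R -> R -> R) : R -> R -> R -> R :=
  fun x t g => gT nu eps lam g (U x t) (dX U x t) (dX (dX U) x t).

(* Main.v *)
Require Import Defs.
From Stdlib Require Import Reals Lra List.
From Coquelicot Require Import Coquelicot.
Open Scope R_scope.

Theorem theorem4 (nu eps lam : R) (U : R -> R -> R) :
  0 < nu -> (eps = 0 \/ eps = 1) -> lam <> 0 ->
  smooth2 U -> is_solution nu eps U ->
  compatible (Fsys nu eps lam U) (Gsys nu eps lam U).
Proof.
  intros Hnu Heps Hlam HS HE x t g.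
  destruct (proj1 (HS nil) x t) as [A0 B0].
  destruct (proj1 (HS (true::nil)) x t) as [A1 B1].
  destruct (proj1 (HS (true::true::nil)) x t) as [A2 B2].
  simpl in A0, B0, A1, B1, A2, B2.
  unfold Fsys, Gsys; cbv beta.
  match goal with |- context [Derive ?f t] => erewrite (is_derive_unique f t); [| unfold fX; auto_derive; [repeat split; assumption | reflexivity]] end.
  match goal with |- context [Derive ?f x] => erewrite (is_derive_unique f x); [| unfold gT; auto_derive; [repeat split; assumption | reflexivity]] end.
  match goal with |- context [Derive (fun g' => fX _ _ _ g' _ _) g] => erewrite (is_derive_unique (fun g' => fX _ _ _ g' _ _) g); [| unfold fX; auto_derive; [repeat split; assumption | reflexivity]] end.
  match goal with |- context [Derive (fun g' => gT _ _ _ g' _ _ _) g] => erewrite (is_derive_unique (fun g' => gT _ _ _ g' _ _ _) g); [| unfold gT; auto_derive; [repeat split; assumption | reflexivity]] end.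
  change (Derive (fun x0 : R => U x x0) t) with (dT U x t).
  change (Derive (fun x0 : R => dX (dX U) x x0) t) with (dT (dX (dX U)) x t).
  change (Derive (fun x0 : R => U x0 t) x) with (dX U x t).
  change (Derive (fun x0 : R => dX U x0 t) x) with (dX (dX U) x t).
  change (Derive (fun x0 : R => dX (dX U) x0 t) x) with (dX (dX (dX U)) x t).
  specialize (HE x t). cbv zeta in HE.
  unfold fX, gT in *.
  assert (Hs : sqrt nu <> 0) by (apply Rgt_not_eq, sqrt_lt_R0; lra).
  assert (Hn : nu <> 0) by lra.
  assert (Hsq : sqrt nu * sqrt nu = nu) by (apply sqrt_sqrt; lra).
  generalize Hsq Hs HE. clear Hsq Hs HE A0 B0 A1 B1 A2 B2 HS.
  generalize (dT U x t) (dT (dX (dX U)) x t) (dX U x t) (dX (dX U) x t) (dX (dX (dX U)) x t) (U x t) (sqrt nu).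
  intros ut uxxt ux uxx uxxx u s Hsq Hs HE. symmetry in Hsq. subst nu.
  destruct Heps as [-> | ->].
  - apply Rminus_diag_uniq; match goal with HE : ?E = 0 |- _ = 0 => transitivity (-/(s*s)^2 * E); [field; repeat split; auto | rewrite HE; ring] end.
  - apply Rminus_diag_uniq; match goal with HE : ?E = 0 |- _ = 0 => transitivity (-/(s*s)^2 * E); [field; repeat split; auto | rewrite HE; ring] end.
Qed.
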